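(* With the setting in the context, the ground state subspace $\mathcal H_0$ is spanned by vectors of the form $|f_G\rangle:=\mathcal A_0|f\rangle$ with $f\in\mathrm{hom}(C,G)^0$; moreover, for $f\in\mathrm{hom}(C,G)^0$, one has $\mathcal A_0|f\rangle\in\mathcal H_0$ if and only if $f\in\ker(\delta^0)$.
   Context: $(C_\bullet,\partial^C_\bullet)$ is a chain complex with each $C_n$ free abelian on a finite set $K_n$, $K_n\ne\emptyset$ for finitely many $n$; $(G_\bullet,\partial^G_\bullet)$ is a chain complex of finite abelian groups. $\mathrm{hom}(C,G)^p=\prod_n\mathrm{Hom}(C_n,G_{n-p})$ with $(\delta^pf)_n=f_{n-1}\partial^C_n-(-1)^p\partial^G_{n-p}f_n$. $\mathrm{hom}(C,G)_p=\mathrm{Hom}(\mathrm{hom}(C,G)^p,U(1))$ (written additively), $\chi_m(f)=m(f)$, $\delta_{p+1}m=m\circ\delta^p$. $\mathcal H=\bigotimes_n\bigotimes_{x\in K_n}\mathbb C[G_n]$ with orthonormal basis $|f\rangle$, $f\in\mathrm{hom}(C,G)^0$. $P_t|f\rangle=|f+t\rangle$, $Q_m|f\rangle=\chi_m(f)|f\rangle$; $A_t=P_{\delta^{-1}t}$ ($t\in\mathrm{hom}(C,G)^{-1}$), $B_m=Q_{\delta_1m}$ ($m\in\mathrm{hom}(C,G)_1$). $\mathcal A_0=\frac1{|\mathrm{hom}(C,G)^{-1}|}\sum_{t}A_t$. Local elements: for $x\in K_n$, $g\in G_{n-p}$, $gx^*\in\mathrm{hom}(C,G)^p$ has $n$-th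 component sending $x\mapsto g$ and other basis elements to $0$, other components $0$; for $r\in\mathrm{Hom}(G_{n-p},U(1))$, $rx_*(f)=r(f_n(x))$. $A_x^0=\frac1{|G_{n+1}|}\sum_{h\in G_{n+1}}A_{hx^*}$, $B_x^0=\frac1{|G_{n-1}|}\sum_{r\in\mathrm{Hom}(G_{n-1},U(1))}B_{rx_*}$ for $x\in K_n$; the ground state subspace is $\mathcal H_0=\{\Psi: A_x^0\Psi=B_x^0\Psi=\Psi\ \forall n,\forall x\in K_n\}$. *)

(* Defs.v *)
From HB Require Import structures.
From mathcomp Require Import all_boot all_order all_algebra all_field.
From mathcomp Require Import boolp classical_sets fsbigop.
Set Implicit Arguments. Unset Strict Implicit. Unset Printing Implicit Defensive.
Import Order.TTheory GRing.Theory Num.Theory.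
Local Open Scope ring_scope.

(* Cells: X is the disjoint union of the bases K_n, with K_n = {x | deg x = n}
   (so only finitely many K_n are nonempty).  The boundary of C is given by its
   integer matrix: d^C x = \sum_y a x y . y. *)
Section Setting.
Variables (X : finType) (deg : X -> int) (a : X -> X -> int)
  (G : int -> finZmodType) (dG : forall n : int, G n -> G (n - 1)).

(* transport between G m and G n (identity when m = n; only used when m = n) *)
Definition castG (m n : int) (g : G m) : G n :=
  match m =P n with
  | ReflectT e => eq_rect m (fun k => G k) g n e
  | ReflectF _ => 0
  end.

(* hom(C,G)^p = prod_n Hom(C_n, G_{n-p}) = functions x |-> f x in G_{deg x - p} *)
Definition cochain (p : int) := {dffun forall x : X, G (deg x - p)}.

Definition czero (p : int) : cochain p :=
  @finfun X (fun x => G (deg x - p)) (fun x => 0).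
Definition cadd (p : int) (f g : cochain p) : cochain p :=
  @finfun X (fun x => G (deg x - p)) (fun x => f x + g x).
Definition copp (p : int) (f : cochain p) : cochain p :=
  @finfun X (fun x => G (deg x - p)) (fun x => - f x).

(* (delta^p f)_n = f_{n-1} d^C_n - (-1)^p d^G_{n-p} f_n *)
Definition delta (p : int) (f : cochain p) : cochain (p + 1) :=
  @finfun X (fun x => G (deg x - (p + 1))) (fun x =>
    (\sum_(y : X) (@castG (deg y - p) (deg x - (p + 1)) (f y)) *~ a x y)
    - (@castG (deg x - p - 1) (deg x - (p + 1)) (dG (f x))) *~ ((-1) ^ p)).

(* the Hilbert space: vectors are coefficient functions on the basis |f>, f in hom^0 *)
Definition hilb := {ffun cochain 0 -> algC^o}.
Definition ket (f : cochain 0) : hilb := [ffun g => (g == f)%:R].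

(* P_s |f> = |f + s> *)
Definition Pop (s : cochain 0) (psi : hilb) : hilb :=
  [ffun g => psi (cadd g (copp s))].
Definition Qop (mu : cochain 0 -> algC) (psi : hilb) : hilb :=
  [ffun g => mu g * psi g].

Definition Aop (t : cochain (-1)) : hilb -> hilb := Pop (delta t).
(* m in hom(C,G)_1 = Hom(hom^1, U(1)); delta_1 m = m \o delta^0 *)
Definition Bop (m : cochain 1 -> algC) : hilb -> hilb :=
  Qop (fun f => m (delta f)).

Definition A0 (psi : hilb) : hilb :=
  (#|{: cochain (-1)}|%:R)^-1 *: \sum_(t : cochain (-1)) Aop t psi.

Definition elem_up (x : X) (h : G (deg x + 1)) : cochain (-1) :=
  @finfun X (fun y => G (deg y - (-1))) (fun y =>
    if y == x then @castG (deg x + 1) (deg y - (-1)) h else 0).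

Definition elem_low (x : X) (r : {ffun G (deg x - 1) -> algC}) : cochain 1 -> algC :=
  fun f => r (f x).

Definition U1hom (A : zmodType) (r : A -> algC) : Prop :=
  (forall u v, r (u + v) = r u * r v) /\ (forall u, `|r u| = 1).

Definition Ax0 (x : X) (psi : hilb) : hilb :=
  (#|{: G (deg x + 1)}|%:R)^-1 *: \sum_(h : G (deg x + 1)) Aop (elem_up h) psi.

Definition Bx0 (x : X) (psi : hilb) : hilb :=
  (#|{: G (deg x - 1)}|%:R)^-1 *:
    \sum_(r \in [set r : {ffun G (deg x - 1) -> algC} | U1hom r]%classic)
      Bop (elem_low r) psi.

Definition in_H0 (psi : hilb) : Prop :=
  forall x : X, Ax0 x psi = psi /\ Bx0 x psi = psi.

End Setting.

(* Main.v *)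
Require Import Defs.
From HB Require Import structures.
From mathcomp Require Import all_boot all_order all_algebra all_field all_fingroup all_character.
From mathcomp Require Import boolp classical_sets fsbigop.
From mathcomp Require Import zify.
Import Order.TTheory GRing.Theory Num.Theory.
Local Open Scope ring_scope.
Set Implicit Arguments. Unset Strict Implicit. Unset Printing Implicit Defensive.

Section Cochains.
Variables (X : finType) (deg : X -> int) (G : int -> finZmodType).

Lemma caddA p : associative (@cadd X deg G p).
Proof. by move=> f g h; apply/ffunP => x; rewrite !ffunE addrA. Qed.
Lemma caddC p : commutative (@cadd X deg G p).
Proof. by move=> f g; apply/ffunP => x; rewrite !ffunE; apply: addrC. Qed.
Lemma cadd0 p : left_id (czero deg G p) (@cadd X deg G p).
Proof. by move=> f; apply/ffunP => x; rewrite !ffunE add0r. Qed.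
Lemma caddN p : left_inverse (czero deg G p) (@copp X deg G p) (@cadd X deg G p).
Proof. by move=> f; apply/ffunP => x; rewrite !ffunE addNr. Qed.

HB.instance Definition _ p := Finite.on (cochain deg G p).
HB.instance Definition _ p := GRing.isZmodule.Build (cochain deg G p)
  (@caddA p) (@caddC p) (@cadd0 p) (@caddN p).

Lemma caddE p (f g : cochain deg G p) : cadd f g = f + g. Proof. by []. Qed.
Lemma coppE p (f : cochain deg G p) : copp f = - f. Proof. by []. Qed.
Lemma czeroE p : czero deg G p = 0. Proof. by []. Qed.
Lemma cochainD p (f g : cochain deg G p) x : (f + g) x = f x + g x.
Proof. by rewrite -caddE ffunE. Qed.
Lemma cochainN p (f : cochain deg G p) x : (- f) x = - f x.
Proof. by rewrite -coppE ffunE. Qed.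
Lemma cochain0 p x : (0 : cochain deg G p) x = 0.
Proof. by rewrite -czeroE ffunE. Qed.
End Cochains.
Section Chars.
Variable M : finZmodType.
Let gT : finGroupType := M.
Let H := [set: gT].
Lemma abH : abelian H.
Proof. apply/centsP => x _ y _. exact: addrC. Qed.
Lemma linH (i : Iirr H) : 'chi[H]_i \is a linear_char.
Proof. by move/char_abelianP: abH. Qed.
Definition rho (i : Iirr H) : {ffun M -> algC} := [ffun u : M => 'chi[H]_i (u : gT)].
Lemma rhoM i (u v : M) : rho i (u + v) = rho i u * rho i v.
Proof. by rewrite !ffunE (lin_charM (linH i)) ?inE. Qed.
Lemma rhoN i (u : M) : `|rho i u| = 1.
Proof. by rewrite ffunE (normC_lin_char (linH i)) ?inE. Qed.
Lemma rho0 i : rho i 0 = 1.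
Proof. by rewrite ffunE (lin_char1 (linH i)). Qed.
Lemma rho_inj : injective rho.
Proof.
move=> i j /ffunP e; apply: irr_inj; apply/cfunP => u.
by have := e u; rewrite !ffunE.
Qed.
Lemma sum_rho (u : M) : \sum_i rho i u = #|M|%:R *+ (u == 0).
Proof.
transitivity (\sum_(i : Iirr H) 'chi[H]_i (u : gT) * ('chi[H]_i 1%g)^*).
  by apply: eq_bigr => i _; rewrite ffunE (lin_char1 (linH i)) conjC1 mulr1.
rewrite (@second_orthogonality_relation gT [set: gT]%G u 1%g (group1 _)).
have -> : ('C_[set: gT][u])%g = [set: gT].
  apply/setP => y; rewrite !inE conjg_set1.
  have -> : (u ^ y)%g = u.
    rewrite conjgE. change (- y + (u + y) = u :> M). by rewrite addrC addrK.
  by rewrite subxx.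
rewrite cardsT.
congr (_ *+ _).
rewrite class1G inE; apply/eqP/eqP => //.
Qed.
Lemma U1hom_rho i : U1hom (rho i).
Proof. by split; [exact: rhoM | exact: rhoN]. Qed.


Lemma U1hom_ex (r : {ffun M -> algC}) : U1hom r -> exists i, r = rho i.
Proof.
move=> [rM rN].
have r0 : r 0 = 1.
  have := rM 0 0; rewrite addr0 => /eqP; rewrite -subr_eq0 -{1}[r 0]mulr1 -mulrBr.
  rewrite mulf_eq0 => /orP[/eqP r00|]; last by rewrite subr_eq0 => /eqP.
  by have := rN 0; rewrite r00 normr0 => /eqP; rewrite eq_sym oner_eq0.
apply: contrapT => Hn.
have S0 i : \sum_(u : M) r u * (rho i u)^* = 0.
  have : r <> rho i by move=> e; apply: Hn; exists i.
  move=> /ffunP; rewrite -/(~ _) => /existsNP [w Hw].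
  pose phi u := r u * (rho i u)^*.
  have phiM u v : phi (u + v) = phi u * phi v.
    by rewrite /phi rM rhoM rmorphM /= mulrACA.
  have phiw : phi w != 1.
    apply/eqP => e; apply: Hw.
    have : phi w * rho i w = rho i w by rewrite e mul1r.
    rewrite /phi -mulrA [_^* * _]mulrC -normCK rhoN expr1n mulr1 => ->.
    by [].
  have : \sum_u phi u = phi w * \sum_u phi u.
    rewrite mulr_sumr (reindex_inj (addIr w)) /=.
    by apply: eq_bigr => u _; rewrite phiM mulrC.
  move=> /eqP; rewrite -subr_eq0 -{1}[\sum_u phi u]mul1r -mulrBl mulf_eq0.
  rewrite subr_eq0 eq_sym (negbTE phiw) /= => /eqP.
  by [].
have : \sum_i \sum_(u : M) r u * (rho i u)^* = 0.
  by rewrite big1 // => i _; exact: S0.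
rewrite exchange_big /=.
under eq_bigr do rewrite -mulr_sumr -rmorph_sum /= sum_rho.
rewrite (bigD1 0) //= big1 => [|u /negbTE ->]; last by rewrite mulr0n conjC0 mulr0.
rewrite addr0 eqxx mulr1n conjC_nat r0 mul1r => /eqP.
rewrite pnatr_eq0 => /eqP e; have : (0 < #|M|)%N by apply/card_gt0P; exists 0.
by rewrite e.
Qed.
Lemma fsbig_U1 (V : zmodType) (F : {ffun M -> algC} -> V) :
  \sum_(r \in [set r : {ffun M -> algC} | U1hom r]%classic) F r = \sum_(i : Iirr H) F (rho i).
Proof.
rewrite (fsbigE (map rho (enum (Iirr H)))).
- rewrite big_map big_enum_cond /=; apply: eq_bigl => i.
  by apply/idP; rewrite in_setE; exact: U1hom_rho.
- by rewrite map_inj_uniq ?enum_uniq //; exact: rho_inj.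
- by move=> r /= /mapP [i _ ->]; exact: U1hom_rho.
- move=> r /U1hom_ex [i ->] /negP []; apply/mapP; exists i => //.
  by rewrite mem_enum.
Qed.
End Chars.
Section Cast.
Variables (G : int -> finZmodType).
Local Notation cG m n := (@castG G m n).
Lemma castG_id m (g : G m) : cG m m g = g.
Proof. by rewrite /castG; case: eqP => // e; rewrite (eq_axiomK e). Qed.
Lemma castG_neq m n (g : G m) : m != n -> cG m n g = 0.
Proof. by rewrite /castG; case: eqP. Qed.
Lemma castG_compl k m n (g : G k) : k = m -> cG m n (cG k m g) = cG k n g.
Proof. by move=> e; case: m / e; rewrite castG_id. Qed.
Lemma castG_compr k m n (g : G k) : m = n -> cG m n (cG k m g) = cG k n g.
Proof. by move=> e; case: n / e; rewrite castG_id. Qed.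
Lemma castGD m n (u v : G m) : cG m n (u + v) = cG m n u + cG m n v.
Proof.
case: (m =P n) => [e|/eqP ne]; first by case: n / e; rewrite !castG_id.
by rewrite !castG_neq // addr0.
Qed.
Lemma castG0 m n : cG m n (0 : G m) = 0.
Proof. by apply/eqP; rewrite -(inj_eq (addrI (cG m n 0))) -castGD !addr0. Qed.
Lemma castGN m n (u : G m) : cG m n (- u) = - cG m n u.
Proof. by apply/eqP; rewrite -addr_eq0 -castGD addNr castG0. Qed.
Lemma castGMz m n (u : G m) z : cG m n (u *~ z) = cG m n u *~ z.
Proof.
case: (m =P n) => [e|/eqP ne]; first by case: n / e; rewrite !castG_id.
by rewrite !castG_neq // mul0rz.
Qed.
Lemma castG_sum m n (I : finType) (F : I -> G m) :
  cG m n (\sum_i F i) = \sum_i cG m n (F i).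
Proof.
case: (m =P n) => [e|/eqP ne]; first by case: n / e; rewrite castG_id; apply: eq_bigr => i _; rewrite castG_id.
by rewrite castG_neq // big1 // => i _; rewrite castG_neq.
Qed.
End Cast.
Lemma addsubACA (V : zmodType) (a b c d : V) : a + b - (c + d) = (a - c) + (b - d).
Proof. by rewrite opprD addrACA. Qed.
Lemma zsub (V : zmodType) (s : V) : 0 + s - s = 0.
Proof. by rewrite add0r subrr. Qed.
Unset Implicit Arguments.
Section Main.
Variables (X : finType) (deg : X -> int) (a : X -> X -> int).
Hypothesis ha : forall x y, a x y != 0 -> deg y = deg x - 1.
Hypothesis haa : forall x z, \sum_(y : X) a x y * a y z = 0.
Variables (G : int -> finZmodType) (dG : forall n : int, G n -> G (n - 1)).
Hypothesis dG_add : forall n : int, {morph dG n : u v / u + v}.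
Hypothesis dGdG : forall (n : int) (g : G n), dG (n - 1) (dG n g) = 0.
Local Notation cG m n := (@castG G m n).
Local Notation coch p := (cochain deg G p).
Local Notation δ := (delta a dG).

Lemma dG0 n : dG n 0 = 0.
Proof. by apply/eqP; rewrite -(inj_eq (addrI (dG n 0))) -dG_add !addr0. Qed.
Lemma dGN n (u : G n) : dG n (- u) = - dG n u.
Proof. by apply/eqP; rewrite -addr_eq0 -dG_add addNr dG0. Qed.
Lemma dGMn n (u : G n) k : dG n (u *+ k) = dG n u *+ k.
Proof. by elim: k => [|k IH]; rewrite ?dG0 // !mulrS dG_add IH. Qed.
Lemma dGMz n (u : G n) z : dG n (u *~ z) = dG n u *~ z.
Proof. by case: z => k; rewrite /intmul ?dGN dGMn. Qed.
Lemma dG_sum n (I : finType) (F : I -> G n) : dG n (\sum_i F i) = \sum_i dG n (F i).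
Proof. by elim/big_rec2: _ => [|i y1 y2 _ <-]; rewrite ?dG0 ?dG_add. Qed.
Lemma castG_dG m n (g : G m) : cG (m - 1) (n - 1) (dG m g) = dG n (cG m n g).
Proof.
case: (m =P n) => [e|/eqP ne]; first by case: n / e; rewrite !castG_id.
rewrite !castG_neq ?dG0 //; apply/eqP => e; move/eqP: ne; apply.
by have := congr1 (fun v => v + 1) e; rewrite /= !subrK.
Qed.
Lemma expN1 : ((-1 : int) ^ (-1 : int)) = -1.
Proof. by []. Qed.

Lemma deltaD p (f g : coch p) : δ (f + g) = δ f + δ g.
Proof.
apply/ffunP => x; rewrite !ffunE.
under eq_bigr do rewrite ffunE castGD mulrzDl.
rewrite big_split /= dG_add castGD mulrzDl; exact: addsubACA.
Qed.
Lemma delta0 p : δ (0 : coch p) = 0.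
Proof. by apply/eqP; rewrite -(inj_eq (addrI (δ (0 : coch p)))) -deltaD !addr0. Qed.
Lemma deltaN p (f : coch p) : δ (- f) = - δ f.
Proof. by apply/eqP; rewrite -addr_eq0 -deltaD addNr delta0. Qed.
Lemma deltaB p (f g : coch p) : δ (f - g) = δ f - δ g.
Proof. by rewrite deltaD deltaN. Qed.

Lemma delta_delta (t : coch (-1)) : @delta X deg a G dG 0 (δ t) = 0.
Proof.
apply/ffunP => x; rewrite cochain0 ffunE ffunE.
under eq_bigr do rewrite ffunE.
rewrite expr0z mulr1z expN1.
under eq_bigr do rewrite castGD castGN castGMz castG_sum mulrzDl mulrNz.
rewrite dG_add dGN dGMz castGD castGN castGMz dG_sum castG_sum big_split /=.
have T4 : cG (deg x - 0 - 1) (deg x - (0 + 1))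
     (dG (deg x - 0)
        (cG (deg x - -1 - 1) (deg x - (-1 + 1)) (dG (deg x - -1) (t x)))) = 0.
  by rewrite -castG_dG dGdG !castG0.
rewrite T4 mul0rz subr0.
have T1 : \sum_i (\sum_i0 cG (deg i - 0) (deg x - (0 + 1))
            (cG (deg i0 - -1) (deg i - (-1 + 1)) (t i0) *~ a i i0)) *~ a x i = 0.
  under eq_bigr do rewrite mulrz_suml.
  rewrite exchange_big /=.
  apply: big1 => z _.
  transitivity (\sum_i cG (deg z - -1) (deg x - (0 + 1)) (t z) *~ (a x i * a i z)).
    apply: eq_bigr => y _.
    have [e|ne] := eqVneq (a y z) 0.
      by rewrite e mulr0 !mulr0z castG0 mul0rz.
    rewrite castGMz castG_compl; last by have := ha y z ne; lia.
    by rewrite -mulrzA mulrC.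
  by rewrite -mulrz_sumr haa mulr0z.
rewrite T1.
have T23 : forall y, - - (cG (deg y - 0) (deg x - (0 + 1))
         (cG (deg y - -1 - 1) (deg y - (-1 + 1)) (dG (deg y - -1) (t y))) *~ 1) *~ a x y
   = cG (deg x - 0 - 1) (deg x - (0 + 1))
        (dG (deg x - 0) (cG (deg y - -1) (deg x - (-1 + 1)) (t y) *~ a x y)).
  move=> y; rewrite opprK mulr1z dGMz castGMz -castG_dG.
  rewrite castG_compl; last by lia.
  by rewrite castG_compr; last by lia.
under eq_bigr do rewrite T23.
exact: zsub.
Qed.

Local Notation hil := (hilb deg G).
Local Notation Aop := (Aop a dG).
Local Notation A0 := (A0 a dG).

Lemma PopE (s : coch 0) (psi : hil) (g : coch 0) : Pop s psi g = psi (g - s).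
Proof. by rewrite ffunE. Qed.
Lemma Pop_ket (s f : coch 0) : Pop s (ket f) = ket (f + s).
Proof.
apply/ffunP => g; rewrite !ffunE caddE coppE.
have -> : ((g : coch 0) - s == f) = ((g : coch 0) == f + s) by apply/eqP/eqP => [<-|->]; rewrite ?subrK ?addrK.
by [].
Qed.
Lemma PopD (s s' : coch 0) (psi : hil) : Pop s (Pop s' psi) = Pop (s + s') psi.
Proof. by apply/ffunP => g; rewrite !ffunE !caddE !coppE opprD addrA. Qed.
Lemma Pop0 (psi : hil) : Pop 0 psi = psi.
Proof. by apply/ffunP => g; rewrite !ffunE caddE coppE subr0. Qed.
Lemma Pop_sum (s : coch 0) (I : finType) (F : I -> hil) :
  Pop s (\sum_i F i) = \sum_i Pop s (F i).
Proof. by apply/ffunP => g; rewrite ffunE !sum_ffunE; apply: eq_bigr => i _; rewrite ffunE. Qed.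
Lemma PopZ (s : coch 0) c (psi : hil) : Pop s (c *: psi) = c *: Pop s psi.
Proof. by apply/ffunP => g; rewrite !ffunE. Qed.

Lemma AopD (t t' : coch (-1)) (psi : hil) : Aop t (Aop t' psi) = Aop (t + t') psi.
Proof. by rewrite /Defs.Aop PopD deltaD. Qed.
Lemma Aop0 (psi : hil) : Aop 0 psi = psi.
Proof. by rewrite /Defs.Aop delta0 Pop0. Qed.

Lemma cardN0 (T : finType) (t0 : T) : (#|T|%:R : algC) != 0.
Proof. by rewrite pnatr_eq0 -lt0n; apply/card_gt0P; exists t0. Qed.

Lemma Aop_A0 t0 (psi : hil) : Aop t0 (A0 psi) = A0 psi.
Proof.
rewrite /Defs.A0 {1}/Defs.Aop PopZ Pop_sum; congr (_ *: _).
symmetry; rewrite (reindex_inj (addrI t0)) /=.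
by apply: eq_bigr => t _; rewrite -AopD.
Qed.

Lemma Ax0_A0 x (psi : hil) : Ax0 a dG x (A0 psi) = A0 psi.
Proof.
rewrite /Ax0; under eq_bigr do rewrite Aop_A0.
rewrite sumr_const -scaler_nat scalerA mulVf ?scale1r //.
exact: cardN0 0.
Qed.

Lemma Bx0E x (psi : hil) :
  Bx0 a dG x psi = [ffun g : coch 0 => (((δ g) x == 0)%:R : algC) * psi g].
Proof.
rewrite /Bx0 fsbig_U1; apply/ffunP => g; rewrite [in RHS]ffunE [in LHS]ffunE sum_ffunE.
under eq_bigr do rewrite ffunE.
rewrite -mulr_suml /elem_low sum_rho -[_ *: _]/(_ * _) mulrA.
case: (_ == 0); last by rewrite mulr0n mulr0 !mul0r.
by rewrite mulr1n mulVf ?mul1r //; exact: cardN0 0.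
Qed.

Lemma elem_upD x (h h' : G (deg x + 1)) :
  @elem_up X deg G x (h + h') = @elem_up X deg G x h + @elem_up X deg G x h'.
Proof.
apply/ffunP => y; rewrite (cochainD (@elem_up X deg G x h)) !ffunE.
by case: (y == x); rewrite ?castGD ?addr0.
Qed.

Lemma Ax0_inv x (psi : hil) : Ax0 a dG x psi = psi ->
  forall h, Aop (@elem_up X deg G x h) psi = psi.
Proof.
move=> E h0; rewrite -{1}E /Ax0 {1}/Defs.Aop PopZ Pop_sum -{2}E /Ax0.
congr (_ *: _); symmetry; rewrite (reindex_inj (addrI h0)) /=.
by apply: eq_bigr => h _; rewrite elem_upD -AopD.
Qed.

Lemma Aop_all (psi : hil) : (forall x h, Aop (@elem_up X deg G x h) psi = psi) ->
  forall t, Aop t psi = psi.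
Proof.
move=> E t.
pose tr (s : seq X) : coch (-1) :=
  @finfun X (fun y => G (deg y - (-1))) (fun y => if y \in s then t y else 0).
have trE s : uniq s -> Aop (tr s) psi = psi.
  elim: s => [|x s IH] /=.
    have -> : tr [::] = 0 by apply/ffunP => y; rewrite /tr cochain0 ?ffunE.
    by move=> _; rewrite Aop0.
  move=> /andP [xs us].
  have -> : tr (x :: s) = @elem_up X deg G x (cG (deg x - -1) (deg x + 1) (t x)) + tr s.
    apply/ffunP => y; rewrite /tr (cochainD (@elem_up X deg G x _)) !ffunE in_cons.
    case: eqP => [e|_] /=.
      subst y; rewrite (negbTE xs) addr0 castG_compl ?castG_id //.
    by rewrite add0r.
  by rewrite -AopD IH // E.
have -> : t = tr (enum X) by apply/ffunP => y; rewrite /tr ffunE mem_enum.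
exact: trE (enum_uniq _).
Qed.

Lemma hsumE (I : finType) (F : I -> hil) (g : coch 0) :
  (\sum_i F i) g = \sum_i F i g.
Proof. exact: sum_ffunE. Qed.

Lemma hscaleE (c : algC) (v : hil) (g : coch 0) : (c *: v) g = c * v g.
Proof. by rewrite ffunE. Qed.

Lemma A0_fix (psi : hil) : (forall t, Aop t psi = psi) -> A0 psi = psi.
Proof.
move=> E; rewrite /Defs.A0; under eq_bigr do rewrite E.
rewrite sumr_const -scaler_nat scalerA mulVf ?scale1r //.
by rewrite pnatr_eq0 -lt0n; apply/card_gt0P; exists (0 : coch (-1)).
Qed.

Lemma A0E (psi : hil) (g : coch 0) :
  A0 psi g = (#|{: coch (-1)}|%:R)^-1 * \sum_(t : coch (-1)) psi (g - δ t).
Proof.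
rewrite /Defs.A0 ffunE sum_ffunE; congr (_ * _).
by apply: eq_bigr => t _; rewrite /Defs.Aop !ffunE caddE coppE.
Qed.

Lemma A0_lin (c : coch 0 -> algC) :
  A0 (\sum_f c f *: ket f) = \sum_f c f *: A0 (ket f).
Proof.
apply/ffunP => g; rewrite A0E (hsumE _ (fun f => c f *: A0 (ket f))).
under eq_bigr do rewrite (hsumE _ (fun f => c f *: ket f)).
under [RHS]eq_bigr do rewrite ffunE A0E.
rewrite exchange_big /= [LHS]mulr_sumr; apply: eq_bigr => f _.
have -> : forall z : algC, c f *: (z : algC^o) = c f * z by [].
rewrite mulrCA; congr (_ * _).
by rewrite mulr_sumr; apply: eq_bigr => t _; rewrite ffunE.
Qed.

Lemma decomp (psi : hil) : psi = \sum_f psi f *: ket f.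
Proof.
apply/ffunP => g; rewrite sum_ffunE (bigD1 g) //= big1 ?addr0.
  by rewrite !ffunE eqxx; exact: (esym (mulr1 _)).
by move=> f ne; rewrite !ffunE eq_sym (negbTE ne); exact: (mulr0 _).
Qed.

Lemma Bx0_at x (psi : hil) (g : coch 0) : Bx0 a dG x psi = psi ->
  (((δ g) x == 0)%:R : algC) * psi g = psi g.
Proof.
move=> E; transitivity (Bx0 a dG x psi g); last by rewrite E.
by rewrite Bx0E [in RHS]ffunE.
Qed.

Lemma A0_ket_ne0 (f : coch 0) : A0 (ket f) f != 0.
Proof.
rewrite A0E mulf_eq0 negb_or invr_eq0; apply/andP; split.
  by rewrite pnatr_eq0 -lt0n; apply/card_gt0P; exists (0 : coch (-1)).
under eq_bigr do rewrite ffunE.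
rewrite -natr_sum pnatr_eq0 (bigD1 (0 : coch (-1))) //=.
by rewrite delta0 subr0 eqxx.
Qed.

Lemma part2 (f : coch 0) :
  in_H0 a dG (A0 (ket f)) <-> δ f = czero deg G (0 + 1).
Proof.
split.
- move=> H; apply/ffunP => x; rewrite [in RHS]ffunE.
  have := Bx0_at x (A0 (ket f)) f (H x).2.
  case: eqP => // _; rewrite mul0r => /esym/eqP.
  by rewrite (negbTE (A0_ket_ne0 f)).
- move=> Hf x; split; first exact: Ax0_A0.
  rewrite Bx0E; apply/ffunP => g; rewrite [LHS]ffunE (A0E (ket f) g).
  rewrite mulrCA; congr (_ * _); rewrite mulr_sumr; apply: eq_bigr => t _.
  rewrite [ket _ _]ffunE.
  have [e|ne] := eqVneq ((g : coch 0) - δ t) f; last by rewrite mulr0.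
  rewrite mulr1.
  have eg : (g : coch 0) = f + δ t by rewrite -e subrK.
  by rewrite eg deltaD Hf delta_delta czeroE addr0 cochain0 eqxx.
Qed.

Lemma part1 (psi : hil) : in_H0 a dG psi <->
  exists c : coch 0 -> algC,
    (forall f, c f != 0 -> in_H0 a dG (A0 (ket f))) /\ 
    psi = \sum_(f : coch 0) c f *: A0 (ket f).
Proof.
split.
- move=> H.
  have fx : A0 psi = psi.
    apply: A0_fix; apply: Aop_all => x h; apply: Ax0_inv; exact: (H x).1.
  exists (fun f => psi f); split.
  + move=> f nz; apply/part2; apply/ffunP => x; rewrite [in RHS]ffunE.
    have := Bx0_at x psi f (H x).2.
    case: eqP => // _; rewrite mul0r => e; move: nz; by rewrite -e eqxx.
  + by rewrite -A0_lin -decomp fx.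
- move=> [c [Hc ->]] x; split.
  + by rewrite -A0_lin Ax0_A0.
  + rewrite Bx0E; apply/ffunP => g; rewrite [LHS]ffunE.
    rewrite !(hsumE _ (fun f => c f *: A0 (ket f))) mulr_sumr.
    apply: eq_bigr => f _; rewrite hscaleE.
    have [->|nz] := eqVneq (c f) 0; first by rewrite !mul0r mulr0.
    move: (Bx0_at x _ g (Hc f nz x).2) => E; rewrite -[in RHS]E.
    exact: mulrCA.
Qed.

Lemma main_sec :
  (forall psi : hilb deg G,
     in_H0 a dG psi <->
     exists c : cochain deg G 0 -> algC,
       (forall f, c f != 0 -> in_H0 a dG (A0 (ket f))) /\ 
       psi = \sum_(f : cochain deg G 0) c f *: A0 (ket f))
  /\ 
  (forall f : cochain deg G 0,
     in_H0 a dG (A0 (ket f)) <-> delta a dG f = czero deg G (0 + 1)).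
Proof. split; [exact: part1 | exact: part2]. Qed.
End Main.

Theorem proposition4 (X : finType) (deg : X -> int) (a : X -> X -> int)
  (ha : forall x y, a x y != 0 -> deg y = deg x - 1)
  (haa : forall x z, \sum_(y : X) a x y * a y z = 0)
  (G : int -> finZmodType) (dG : forall n : int, G n -> G (n - 1))
  (dG_add : forall n : int, {morph dG n : u v / u + v})
  (dGdG : forall (n : int) (g : G n), dG (n - 1) (dG n g) = 0) :
  (forall psi : hilb deg G,
     in_H0 a dG psi <->
     exists c : cochain deg G 0 -> algC,
       (forall f, c f != 0 -> in_H0 a dG (A0 a dG (ket f))) /\
       psi = \sum_(f : cochain deg G 0) c f *: A0 a dG (ket f))
  /\
  (forall f : cochain deg G 0,
     in_H0 a dG (A0 a dG (ket f)) <-> delta a dG f = czero deg G (0 + 1)).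
Proof. exact: (@main_sec X deg a ha haa G dG dG_add dGdG). Qed.
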